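(* Let $\mathbf u$ be an infinite word over a finite alphabet whose language is closed under reversal. The following are equivalent: (1) the defect $D(\mathbf u)$ is finite; (2) there exists an integer $H$ such that for every prefix $w$ of $\mathbf u$ with $|w|\ge H$, the longest palindromic suffix of $w$ occurs in $w$ exactly once.
   Context: For a finite word $w=w_0\cdots w_{n-1}$ its reversal is $\overline{w}=w_{n-1}\cdots w_0$; $w$ is a palindrome if $w=\overline{w}$ (the empty word is a palindrome). The language of $\mathbf u$ is closed under reversal if every factor's reversal is also a factor. The defect of a finite word $w$ is $D(w)=|w|+1-(\text{number of distinct palindromic factors of } w, \text{ including the empty word})$. The defect of an infinite word is $D(\mathbf u)=\sup\{D(w): w \text{ a prefix of } \mathbf u\}$ (possibly $+\infty$). *)

(* Defs.v *)
From mathcomp Require Import all_boot all_order all_algebra.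
Set Implicit Arguments. Unset Strict Implicit. Unset Printing Implicit Defensive.

Definition prefix_of {A : Type} (u : nat -> A) (n : nat) : seq A := mkseq u n.

Definition factor_of {A : Type} (u : nat -> A) (w : seq A) : Prop :=
  exists i : nat, w = mkseq (fun k => u (i + k)) (size w).

Definition closed_under_reversal {A : Type} (u : nat -> A) : Prop :=
  forall w : seq A, factor_of u w -> factor_of u (rev w).

Definition palindrome {A : eqType} (w : seq A) : bool := rev w == w.

Definition factors {A : eqType} (w : seq A) : seq (seq A) :=
  [seq take j (drop i w) | i <- iota 0 (size w).+1, j <- iota 0 (size w).+1].

(* Number of distinct palindromic factors of w, including the empty word. *)
Definition num_pal {A : eqType} (w : seq A) : nat :=
  size (undup (filter palindrome (factors w))).

Definition defect {A : eqType} (w : seq A) : int :=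
  (((size w).+1)%:Z - (num_pal w)%:Z)%R.

Definition finite_defect {A : eqType} (u : nat -> A) : Prop :=
  exists K : int, forall n : nat, (defect (prefix_of u n) <= K)%R.

(* Longest palindromic suffix: drop the least i such that drop i w is a
   palindrome (exists since drop (size w) w = [::] is a palindrome). *)
Definition lps {A : eqType} (w : seq A) : seq A :=
  drop (find (fun i => palindrome (drop i w)) (iota 0 (size w).+1)) w.

Definition occurrences {A : eqType} (v w : seq A) : nat :=
  count (fun i => take (size v) (drop i w) == v) (iota 0 (size w - size v).+1).

(* Main.v *)
Require Import Defs.
From mathcomp Require Import all_boot all_order all_algebra zify.

Section W.
Variable A : eqType.
Implicit Types (w s v : seq A).

Lemma mem_factors v w : (v \in factors w) = infix v w.
Proof.
apply/idP/idP.
  case/allpairsP=> [[i j] [_ _ /= ->]].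
  exact: infix_trans (infix_take _ _) (infix_drop _ _).
case/infixP=> p [q ->]; apply/allpairsP; exists (size p, size v); split=> /=.
- by rewrite in_cons mem_iota !size_cat; lia.
- by rewrite in_cons mem_iota !size_cat; lia.
by rewrite drop_size_cat // take_size_cat.
Qed.

Lemma lps_spec s : exists k, [/\ k <= size s, lps s = drop k s,
  palindrome (drop k s) & forall i, palindrome (drop i s) -> k <= i].
Proof.
set P := fun i => palindrome (drop i s).
have hP : has P (iota 0 (size s).+1).
  apply/hasP; exists (size s); first by rewrite mem_iota; lia.
  by rewrite /P drop_size.
exists (find P (iota 0 (size s).+1)); split.
- by move: hP; rewrite has_find size_iota; lia.
- by [].
- by have := nth_find 0 hP; rewrite nth_iota ?add0n //; move: hP; rewrite has_find size_iota.
move=> i Pi; case: (leqP (find P (iota 0 (size s).+1)) i) => // lt.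
have := before_find 0 lt; rewrite nth_iota ?add0n; first by rewrite /P Pi.
by move: hP; rewrite has_find size_iota => h; lia.
Qed.

Lemma pal_rev v : palindrome v -> rev v = v.
Proof. by move/eqP. Qed.

Lemma step_infix w a v : palindrome v ->
  infix v (rcons w a) = (v == lps (rcons w a)) || infix v w.
Proof.
move=> pv; move Hs : (rcons w a) => s.
have [k [ks Ek pk mk]] := lps_spec s.
apply/idP/idP; last first.
  case/orP; last by move=> h; rewrite -Hs; apply: infix_trans h (infix_rcons _ _).
  by move/eqP->; rewrite Ek infix_drop.
rewrite -Hs infix_rconsl Hs; case/orP=> [|->]; last by rewrite orbT.
case/suffixP=> p Es.
have Ev : v = drop (size p) s by rewrite Es drop_size_cat.
have := mk (size p); rewrite -Ev => /(_ pv).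
rewrite leq_eqVlt; case/orP=> [/eqP eki|lt].
  by rewrite Ek eki -Ev eqxx.
apply/orP; right.
set L := drop k s.
have EL : v = drop (size p - k) L by rewrite /L drop_drop subnK ?Ev //; lia.
have pL : rev L = L by apply/eqP.
have Ev2 : v = take (size L - (size p - k)) L.
  by rewrite -[v]pal_rev // EL -{1}pL drop_rev revK.
have sL : size L = size s - k by rewrite size_drop.
have ss : size s = size p + size v by rewrite Es size_cat.
set q := drop (size L - (size p - k)) L.
have Es2 : s = take k s ++ v ++ q by rewrite Ev2 cat_take_drop cat_take_drop.
have qn : q != [::].
  by rewrite -size_eq0 /q size_drop; lia.
case/lastP: q Es2 qn => // q' b Es2 _.
move: Es2; rewrite -Hs -!rcons_cat => /rcons_inj [-> _].
by rewrite catA infix_catr // suffix_infix.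
Qed.

Lemma num_pal_rcons w a :
  num_pal (rcons w a) = num_pal w + ~~ infix (lps (rcons w a)) w.
Proof.
have [k [ks Ek pk mk]] := lps_spec (rcons w a).
have pl : palindrome (lps (rcons w a)) by rewrite Ek.
have E : filter palindrome (factors (rcons w a)) =i
         lps (rcons w a) :: filter palindrome (factors w).
  move=> x; rewrite in_cons !mem_filter !mem_factors.
  case: (boolP (palindrome x)) => px /=; last first.
    by rewrite orbF; case: eqP => // Ex; rewrite Ex pl in px.
  exact: step_infix px.
have E2 : undup (filter palindrome (factors (rcons w a))) =i
   undup (lps (rcons w a) :: filter palindrome (factors w)).
  by move=> x; rewrite !mem_undup E.
rewrite /num_pal (perm_size (uniq_perm (undup_uniq _) (undup_uniq _) E2)).
have U : forall (x : seq A) (s : seq (seq A)), undup (x :: s) = if x \in s then undup s else x :: undup s by [].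
rewrite U mem_filter pl mem_factors /=.
by case: (infix _ w) => /=; rewrite ?addn0 ?addn1.
Qed.

Lemma occ_rcons w a :
  (occurrences (lps (rcons w a)) (rcons w a) == 1) = ~~ infix (lps (rcons w a)) w.
Proof.
have [k [ks Ek pk mk]] := lps_spec (rcons w a).
move: (lps (rcons w a)) Ek => v Ev.
move Hs : (rcons w a) => s; rewrite Hs in ks Ev.
have sv : size v = size s - k by rewrite Ev size_drop.
have ss : size s = (size w).+1 by rewrite -Hs size_rcons.
rewrite /occurrences (_ : size s - size v = k); last by lia.
rewrite -addn1 iotaD count_cat /= add0n -Ev take_size eqxx /= addn0 addn1 eqSS.
rewrite -leqn0 leqNgt -has_count; congr (~~ _); apply/idP/idP.
  case/hasP=> i; rewrite mem_iota => /andP[_ ik] /eqP Ei.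
  have iw : i + size v <= size w by lia.
  move: Ei; rewrite -Hs drop_rcons; last by lia.
  rewrite -cats1 takel_cat; last by rewrite size_drop; lia.
  move=> <-; exact: infix_trans (infix_take _ _) (infix_drop _ _).
case/infixP=> p [q Ew]; apply/hasP; exists (size p).
  rewrite mem_iota; move: ss; rewrite Ew !size_cat; lia.
by rewrite -Hs Ew -cats1 -!catA drop_size_cat // take_size_cat.
Qed.
End W.
Require Import Stdlib.Logic.Classical.
Lemma count_iotaD (b : nat -> bool) m n :
  count b (iota 0 (m + n)) = count b (iota 0 m) + count (fun i => b (m + i)) (iota 0 n).
Proof. by rewrite iotaD count_cat add0n -[m]addn0 iotaDl count_map addn0. Qed.

Lemma ev_false (c : nat) : forall (b : nat -> bool),
  (forall n, count b (iota 0 n) <= c) -> exists H, forall n, H <= n -> b n = false.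
Proof.
elim: c => [|c IH] b hb.
  exists 0 => n _; have := hb n.+1; rewrite -addn1 count_iotaD /= !addn0.
  by case: (b n); rewrite ?addn1.
case: (classic (exists m, b m = true)) => [[m bm]|nb]; last first.
  by exists 0 => n _; apply/negbTE/negP => bn; apply: nb; exists n.
have [H' hH'] : exists H, forall n, H <= n -> b (m.+1 + n) = false.
  apply: (IH (fun i => b (m.+1 + i))) => n.
  have := hb (m.+1 + n); rewrite count_iotaD -addn1 count_iotaD /= !addn0 bm.
  by move=> h; lia.
exists (m.+1 + H') => n hn; rewrite -(subnKC (leq_trans (leq_addr H' m.+1) hn)).
by apply: hH'; lia.
Qed.

Theorem corollary3 (A : finType) (u : nat -> A) :
  closed_under_reversal u ->
  (finite_defect u <->
   exists H : nat, forall n : nat, H <= n ->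
     occurrences (lps (prefix_of u n)) (prefix_of u n) = 1).
Proof.
move=> _.
have preS n : prefix_of u n.+1 = rcons (prefix_of u n) (u n) by rewrite /prefix_of mkseqS.
pose b i := infix (lps (prefix_of u i.+1)) (prefix_of u i).
pose g n := count b (iota 0 n).
have occS n : (occurrences (lps (prefix_of u n.+1)) (prefix_of u n.+1) == 1) = ~~ b n.
  by rewrite /b preS occ_rcons.
have gS n : g n.+1 = g n + b n by rewrite /g -addn1 count_iotaD /= !addn0.
have Ng n : num_pal (prefix_of u n) + g n = n.+1.
  elim: n => [|n IH]; first by [].
  rewrite preS num_pal_rcons -preS gS.
  rewrite -/(b n); case: (b n) IH => /= IH; lia.
have defg n : defect (prefix_of u n) = Posz (g n).
  have := Ng n; rewrite /defect size_mkseq; lia.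
split.
  case=> K hK.
  have hc : forall n, count b (iota 0 n) <= `|K|%N.
    by move=> n; have := hK n; rewrite defg /g; lia.
  have [H hH] := @ev_false _ _ hc.
  exists H.+1 => n; case: n => // n hn; apply/eqP; rewrite occS hH //.
case=> H hH.
have bf n : H <= n -> b n = false.
  move=> hn; have := occS n; rewrite hH; last by lia.
  by rewrite eqxx => /esym/negbTE.
exists (Posz (g H)) => n; rewrite defg.
case: (leqP n H) => hn.
  by rewrite -(subnKC hn) /g count_iotaD; lia.
rewrite -(subnKC (ltnW hn)); elim: (n - H) => [|k IH]; first by rewrite addn0.
by rewrite addnS gS bf ?addn0 //; lia.
Qed.
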